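(* Let $g$ be a consistent piece-wise quadratic function with pieces $p_1,\dots,p_N$ and breakpoints $-\infty=\tau_0<\tau_1<\dots<\tau_N=+\infty$. For $\beta\in\mathbb{R}$ and $k\in\{1,\dots,N\}$ let $\ell_{k;\beta}(\alpha)=\beta\alpha-p_k^*(\beta)$, where $p_k^*(\beta)=\sup_\alpha\{\beta\alpha-p_k(\alpha)\}$. Fix $\beta\in\mathbb{R}$, let $\alpha^\star(\beta)\in\arg\max_\alpha\{\beta\alpha-g(\alpha)\}$, and let $k^*$ be such that $\tau_{k^*-1}\le\alpha^\star(\beta)\le\tau_{k^*}$. Then (1) $\alpha^\star(\beta)\notin\{\tau_{k^*-1},\tau_{k^*}\}$; and (2) $\ell_{k^*;\beta}(\alpha^\star(\beta))=g(\alpha^\star(\beta))$ and $\ell_{k^*;\beta}(\alpha)\le g(\alpha)$ for every $\alpha\in\mathbb{R}$.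
   Context: A continuous $g$ is piece-wise quadratic with $N$ pieces if $g=p_k$ on $[\tau_{k-1},\tau_k]$ for quadratic functions $p_k$ with $p_k\ne p_{k+1}$ as functions; it is consistent if every $p_k$ is strongly convex and $g=\min_kp_k$ on $\mathbb{R}$. *)

(* Defs.v *)
From Stdlib Require Import Reals.
From Coquelicot Require Import Coquelicot.
Open Scope R_scope.

Record quad := Quad { qa : R; qb : R; qc : R }.

Definition qeval (p : quad) (x : R) : R := qa p * x ^ 2 + qb p * x + qc p.

Definition strongly_convex (p : quad) : Prop := 0 < qa p.

Definition in_piece (tau : nat -> Rbar) (k : nat) (x : R) : Prop :=
  Rbar_le (tau (k - 1)%nat) (Finite x) /\ Rbar_le (Finite x) (tau k).

Definition piecewise_quadratic (g : R -> R) (N : nat) (p : nat -> quad)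
  (tau : nat -> Rbar) : Prop :=
  (1 <= N)%nat /\
  continuity g /\
  tau 0%nat = m_infty /\ tau N = p_infty /\
  (forall i, (i < N)%nat -> Rbar_lt (tau i) (tau (S i))) /\
  (forall k x, (1 <= k <= N)%nat -> in_piece tau k x -> g x = qeval (p k) x) /\
  (forall k, (1 <= k < N)%nat -> qeval (p k) <> qeval (p (S k))).

Definition consistent (g : R -> R) (N : nat) (p : nat -> quad) : Prop :=
  (forall k, (1 <= k <= N)%nat -> strongly_convex (p k)) /\
  (forall x, (forall k, (1 <= k <= N)%nat -> g x <= qeval (p k) x) /\
             (exists k, (1 <= k <= N)%nat /\ g x = qeval (p k) x)).

Definition conj_fun (f : R -> R) (beta : R) : Rbar :=
  Lub_Rbar (fun y => exists a, y = beta * a - f a).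

(* l_{k;beta}(alpha) = beta alpha - p_k^*(beta); p_k^*(beta) is finite for
   strongly convex p_k, so we take its real part. *)
Definition ell (p : nat -> quad) (k : nat) (beta alpha : R) : R :=
  beta * alpha - real (conj_fun (qeval (p k)) beta).

(* Main.v *)
Require Import Defs.
From Stdlib Require Import Reals Lra Lia Psatz FunctionalExtensionality.
From Coquelicot Require Import Coquelicot.
Open Scope R_scope.

Lemma small_pos (A B d : R) : 0 < d ->
  (forall s, 0 < s < d -> 0 <= A*s^2 + B*s) -> 0 <= B.
Proof.
  intros Hd H. destruct (Rle_or_lt 0 B) as [h|h]; auto. exfalso.
  set (s := Rmin (d/2) (-B/(2*(Rabs A + 1)))).
  assert (Ha : 0 <= Rabs A) by apply Rabs_pos.
  assert (Hq : 0 < -B/(2*(Rabs A + 1))).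
  { apply Rdiv_lt_0_compat; lra. }
  assert (Hs : 0 < s) by (unfold s; apply Rmin_glb_lt; lra).
  assert (Hsd : s < d) by (unfold s; pose proof (Rmin_l (d/2) (-B/(2*(Rabs A + 1)))); lra).
  assert (Hs2 : s <= -B/(2*(Rabs A + 1))) by apply Rmin_r.
  assert (Hs3 : s * (2*(Rabs A + 1)) <= -B).
  { apply Rmult_le_compat_r with (r := 2*(Rabs A+1)) in Hs2; [|lra].
    field_simplify in Hs2; lra. }
  assert (HA : A <= Rabs A) by apply Rle_abs.
  assert (A*s <= Rabs A * s) by (apply Rmult_le_compat_r; lra).
  assert (A * s + B < 0) by nra.
  specialize (H s (conj Hs Hsd)). nra.
Qed.

Lemma left_int (L : Rbar) t : Rbar_lt L (Finite t) ->
  exists d, 0 < d /\ forall s, 0 < s < d -> Rbar_le L (Finite (t - s)).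
Proof.
  destruct L as [r| |]; simpl; intros H.
  - exists (t - r). split; [lra|]. intros s Hs. simpl. lra.
  - contradiction.
  - exists 1. split; [lra|]. intros; simpl; auto.
Qed.

Lemma right_int (L : Rbar) t : Rbar_lt (Finite t) L ->
  exists d, 0 < d /\ forall s, 0 < s < d -> Rbar_le (Finite (t + s)) L.
Proof.
  destruct L as [r| |]; simpl; intros H.
  - exists (r - t). split; [lra|]. intros s Hs. simpl. lra.
  - exists 1. split; [lra|]. intros; simpl; auto.
  - contradiction.
Qed.

Lemma qeval_shift (P : quad) t s :
  qeval P (t + s) = qeval P t + qa P * s^2 + (2*qa P*t + qb P)*s.
Proof. unfold qeval; ring. Qed.

Lemma qeval_shiftm (P : quad) t s :
  qeval P (t - s) = qeval P t + qa P * s^2 - (2*qa P*t + qb P)*s.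
Proof. unfold qeval; ring. Qed.

Lemma bp g N p tau (Hpw : piecewise_quadratic g N p tau) (Hcons : consistent g N p)
  beta t (Hargmax : forall a, beta * a - g a <= beta * t - g t)
  k (Hk : (1 <= k < N)%nat) (Ht : tau k = Finite t) : False.
Proof.
  destruct Hpw as [HN [_ [H0 [HNi [Hmon [Hpiece Hdiff]]]]]].
  destruct Hcons as [_ Hmin].
  assert (L : Rbar_lt (tau (k-1)%nat) (Finite t)).
  { rewrite <- Ht. replace k with (S (k-1)) at 2 by lia. apply Hmon; lia. }
  assert (R : Rbar_lt (Finite t) (tau (S k))).
  { rewrite <- Ht. apply Hmon; lia. }
  destruct (left_int _ _ L) as [dL [HdL HL]].
  destruct (right_int _ _ R) as [dR [HdR HR]].
  set (P := p k). set (Q := p (S k)).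
  assert (GP : forall s, 0 <= s < dL -> g (t - s) = qeval P (t - s)).
  { intros s Hs. apply Hpiece; [lia|]. split.
    - destruct (Req_dec s 0) as [->|]; [|apply HL; lra].
      replace (t - 0) with t by ring. apply Rbar_lt_le; auto.
    - rewrite Ht. simpl. lra. }
  assert (GQ : forall s, 0 <= s < dR -> g (t + s) = qeval Q (t + s)).
  { intros s Hs. apply Hpiece; [lia|]. split.
    - replace (S k - 1)%nat with k by lia. rewrite Ht. simpl. lra.
    - destruct (Req_dec s 0) as [->|]; [|apply HR; lra].
      replace (t + 0) with t by ring. apply Rbar_lt_le; auto. }
  assert (Pt : g t = qeval P t).
  { replace t with (t - 0) at 1 2 by ring. apply GP; lra. }
  assert (Qt : g t = qeval Q t).
  { replace t with (t + 0) at 1 2 by ring. apply GQ; lra. }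
  set (D1 := 2*qa P*t + qb P). set (D2 := 2*qa Q*t + qb Q).
  assert (E1 : 0 <= beta - D1).
  { apply (small_pos (qa P) _ dL HdL). intros s Hs.
    specialize (Hargmax (t - s)). rewrite GP in Hargmax by lra.
    rewrite qeval_shiftm in Hargmax. fold D1 in Hargmax. lra. }
  assert (E2 : 0 <= D2 - beta).
  { apply (small_pos (qa Q) _ dR HdR). intros s Hs.
    specialize (Hargmax (t + s)). rewrite GQ in Hargmax by lra.
    rewrite qeval_shift in Hargmax. fold D2 in Hargmax. lra. }
  assert (E3 : 0 <= D1 - D2).
  { apply (small_pos (qa Q - qa P) _ dL HdL). intros s Hs.
    destruct (Hmin (t - s)) as [Hm _]. specialize (Hm (S k) ltac:(lia)).
    rewrite GP in Hm by lra. fold Q in Hm.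
    rewrite !qeval_shiftm in Hm. fold D1 D2 in Hm. lra. }
  assert (ED : D1 = D2) by lra.
  assert (A1 : qa Q - qa P >= 0).
  { destruct (Hmin (t - dL/2)) as [Hm _]. specialize (Hm (S k) ltac:(lia)).
    rewrite GP in Hm by lra. fold Q in Hm.
    rewrite !qeval_shiftm in Hm. fold D1 D2 in Hm.
    assert (0 < (dL/2)^2) by (apply pow_lt; lra). nra. }
  assert (A2 : qa P - qa Q >= 0).
  { destruct (Hmin (t + dR/2)) as [Hm _]. specialize (Hm k ltac:(lia)).
    rewrite GQ in Hm by lra. fold P in Hm.
    rewrite !qeval_shift in Hm. fold D1 D2 in Hm.
    assert (0 < (dR/2)^2) by (apply pow_lt; lra). nra. }
  apply (Hdiff k); [lia|]. fold P Q.
  apply functional_extensionality. intros x.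
  assert (EA : qa P = qa Q) by lra.
  assert (EB : qb P = qb Q) by (unfold D1, D2 in ED; rewrite EA in ED; lra).
  assert (EC : qc P = qc Q) by (unfold qeval in Pt, Qt; rewrite EA, EB in Pt; lra).
  unfold qeval. rewrite EA, EB, EC. reflexivity.
Qed.

Theorem lemma6 (g : R -> R) (N : nat) (p : nat -> quad) (tau : nat -> Rbar)
  (Hpw : piecewise_quadratic g N p tau) (Hcons : consistent g N p)
  (beta astar : R)
  (Hargmax : forall a, beta * a - g a <= beta * astar - g astar)
  (kstar : nat) (Hk : (1 <= kstar <= N)%nat) (Hin : in_piece tau kstar astar) :
  (Finite astar <> tau (kstar - 1)%nat /\ Finite astar <> tau kstar) /\
  (ell p kstar beta astar = g astar /\
   forall a, ell p kstar beta a <= g a).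
Proof.
  assert (P1 : Finite astar <> tau (kstar - 1)%nat).
  { intros E. destruct (Nat.eq_dec kstar 1) as [->|].
    - destruct Hpw as [_ [_ [H0 _]]]. simpl in E. rewrite H0 in E. discriminate.
    - apply (bp g N p tau Hpw Hcons beta astar Hargmax (kstar - 1)); [lia|auto]. }
  assert (P2 : Finite astar <> tau kstar).
  { intros E. destruct (Nat.eq_dec kstar N) as [->|].
    - destruct Hpw as [_ [_ [_ [HNi _]]]]. rewrite HNi in E. discriminate.
    - apply (bp g N p tau Hpw Hcons beta astar Hargmax kstar); [lia|auto]. }
  split; [auto|].
  set (t := astar) in *.
  destruct Hin as [Hl Hr].
  destruct (Rbar_le_lt_or_eq_dec _ _ Hl) as [L|E]; [|congruence].
  destruct (Rbar_le_lt_or_eq_dec _ _ Hr) as [R|E]; [|congruence].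
  destruct (left_int _ _ L) as [dL [HdL HL]].
  destruct (right_int _ _ R) as [dR [HdR HR]].
  destruct Hpw as [_ [_ [_ [_ [_ [Hpiece _]]]]]].
  destruct Hcons as [Hconv _].
  set (P := p kstar).
  assert (GP : forall x, in_piece tau kstar x -> g x = qeval P x) by (intros; apply Hpiece; auto).
  assert (Pt : g t = qeval P t).
  { apply GP. split; apply Rbar_lt_le; auto. }
  set (D := 2*qa P*t + qb P).
  assert (E1 : 0 <= beta - D).
  { apply (small_pos (qa P) _ dL HdL). intros s Hs.
    specialize (Hargmax (t - s)). rewrite GP in Hargmax.
    - rewrite qeval_shiftm in Hargmax. fold D in Hargmax. lra.
    - split; [apply HL; lra|]. eapply Rbar_le_trans; [|apply Rbar_lt_le; exact R].
      simpl; lra. }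
  assert (E2 : 0 <= D - beta).
  { apply (small_pos (qa P) _ dR HdR). intros s Hs.
    specialize (Hargmax (t + s)). rewrite GP in Hargmax.
    - rewrite qeval_shift in Hargmax. fold D in Hargmax. lra.
    - split; [|apply HR; lra]. eapply Rbar_le_trans; [apply Rbar_lt_le; exact L|].
      simpl; lra. }
  assert (ED : D = beta) by lra.
  assert (Ha : 0 < qa P) by (apply Hconv; auto).
  assert (Hconj : conj_fun (qeval P) beta = Finite (beta * t - qeval P t)).
  { unfold conj_fun. apply is_lub_Rbar_unique. split.
    - intros y [a ->]. simpl.
      replace a with (t + (a - t)) by ring. rewrite qeval_shift. fold D. rewrite ED.
      assert (0 <= (a - t)^2) by (apply pow2_ge_0). nra.
    - intros b Hb. apply Hb. exists t. reflexivity. }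
  unfold ell. fold P. rewrite Hconj. simpl. split.
  - rewrite Pt; ring.
  - intros a. specialize (Hargmax a). rewrite Pt in Hargmax. lra.
Qed.
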